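(* With the notation of the context, for every $i\in\{1,\dots,n\}$: (1) if the indecomposable module $L(i,k)$ exists, then $0<k<2n$; (2) $\ell(P_i)=n+\inf\{r\in\mathbb{N}\mid\sigma^r(i)\in\Delta\}$; in particular $n\leqslant\ell(P_i)<2n$; (3) if $n\leqslant k<\ell(P_i)$, then $\ell(P_{\sigma^k(i)})=\ell(P_i)-(k-n)$; (4) if $0<k<\ell(P_i)$, then $\Omega(L(i,k))\cong L(\sigma^k(i),\ell(P_i)-k)$.
   Context: Let $K$ be a field, $n\geqslant2$, $Q$ the cyclic quiver with vertices $1,\dots,n$ and arrows $\alpha_i:i\to i+1$ ($1\leqslant i\leqslant n-1$), $\alpha_n:n\to1$, paths composed right to left. Let $\rho_1=\alpha_n\cdots\alpha_1$ and $\rho_i=\alpha_{i-1}\cdots\alpha_1\alpha_n\cdots\alpha_i$ for $2\leqslant i\leqslant n$. Fix $1\leqslant m\leqslant n$ and $\Delta=\{\lambda_1<\cdots<\lambda_m\}\subseteq\{1,\dots,n\}$, and let $A_{n,m}=KQ/\langle\rho_\lambda:\lambda\in\Delta\rangle$, with Jacobson radical $J$. Modules are finitely generated left $A_{n,m}$-modules. $e_i$ is the idempotent at vertex $i$, $P_i=A_{n,m}e_i$, $S_i=P_i/Je_i$. The Loewy length is $\ell(M)=\min\{s\geqslant1: J^sM=0\}$. $L(i,k)$ denotes the indecomposable module with top $S_i$ and Loewy length $k$ (i.e. $P_i/J^kP_i$ for $1\leqslant k\leqslant\ell(P_i)$). $\sigma$ is the permutation of $\{1,\dots,n\}$ with $\sigma(i)=i+1$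 for $i<n$ and $\sigma(n)=1$; $\sigma^r$ its $r$-th power, $\sigma^0=\mathrm{id}$. $\Omega(M)$ is the kernel of a projective cover of $M$. *)

(* Defs.v *)
(* Modules over A_{n,m} = KQ/<rho_lambda> are encoded as
   finite-dimensional representations of the cyclic quiver Q bound by the
   relations rho_lambda (lambda in Delta).  Vertices 1..n are 'I_n (vertex v
   is the ordinal v-1); sigma is the cyclic successor ordS. Row-vector
   convention: the arrow alpha_i : i -> sigma i acts by v |-> v *m mor M i. *)
From HB Require Import structures.
From mathcomp Require Import all_boot all_algebra.
Set Implicit Arguments. Unset Strict Implicit. Unset Printing Implicit Defensive.
Import GRing.Theory.
Local Open Scope ring_scope.

Section Nakayama.
Variable K : fieldType.
Variable n : nat.

Definition sigma (i : 'I_n) : 'I_n := ordS i.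

Record rep := Rep {
  dimv : 'I_n -> nat;
  mor : forall i : 'I_n, 'M[K]_(dimv i, dimv (sigma i)) }.

Fixpoint pathmx (M : rep) (s : nat) (i : 'I_n)
  : 'M[K]_(dimv M i, dimv M (iter s sigma i)) :=
  match s return 'M[K]_(dimv M i, dimv M (iter s sigma i)) with
  | 0 => 1%:M
  | s'.+1 => pathmx M s' i *m mor M (iter s' sigma i)
  end.

(* M is an A_{n,m}-module: every rho_lambda (lambda in Delta) acts as 0;
   rho_lambda is the path of length n starting (and ending) at lambda *)
Definition is_mod (Delta : {set 'I_n}) (M : rep) : Prop :=
  forall l, l \in Delta -> pathmx M n l = 0.

Definition homT (M N : rep) := forall i : 'I_n, 'M[K]_(dimv M i, dimv N i).
Definition is_hom (M N : rep) (f : homT M N) : Prop :=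
  forall i, mor M i *m f (sigma i) = f i *m mor N i.
Definition hom_surj (M N : rep) (f : homT M N) : Prop :=
  forall i, row_full (f i).
Definition hom_inj (M N : rep) (f : homT M N) : Prop :=
  forall i, row_free (f i).

Definition subT (M : rep) := forall i : 'I_n, 'M[K]_(dimv M i).
Definition is_sub (M : rep) (U : subT M) : Prop :=
  forall i, (U i *m mor M i <= U (sigma i))%MS.

Definition indecomposable (M : rep) : Prop :=
  (exists i, 0 < dimv M i)%N /\
  forall U V : subT M, is_sub U -> is_sub V ->
    (forall i, (U i + V i == 1%:M)%MS && (U i :&: V i == (0 : 'M[K]_(dimv M i)))%MS) ->
    (forall i, (U i == (0 : 'M[K]_(dimv M i)))%MS) \/
    (forall i, (V i == (0 : 'M[K]_(dimv M i)))%MS).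

(* J^s M = 0 : J is the arrow ideal (= Jacobson radical of A_{n,m}),
   J^s M is spanned by the images of the paths of length s *)
Definition Jpow_zero (M : rep) (s : nat) : Prop :=
  forall i, pathmx M s i = 0.

Definition loewy_length (M : rep) (k : nat) : Prop :=
  (1 <= k)%N /\ Jpow_zero M k /\ forall s, (1 <= s < k)%N -> ~ Jpow_zero M s.

Definition simple_rep (i : 'I_n) : rep :=
  @Rep (fun j => nat_of_bool (j == i)) (fun j => 0).

(* top M = M/JM is isomorphic to S_i: there is an epimorphism M -> S_i whose
   kernel is JM; (JM) at vertex sigma j is the image of alpha_j *)
Definition top_is (i : 'I_n) (M : rep) : Prop :=
  exists f : homT M (simple_rep i),
    is_hom f /\ hom_surj f /\
    forall j, (kermx (f (sigma j)) == mor M j)%MS.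

Definition isL (Delta : {set 'I_n}) (i : 'I_n) (k : nat) (M : rep) : Prop :=
  is_mod Delta M /\ indecomposable M /\ top_is i M /\ loewy_length M k.

(* P is (isomorphic to) P_i = A e_i: it represents the functor M |-> e_i M,
   i.e. there is x in e_i P such that for every module M and m in e_i M there
   is a unique homomorphism P -> M sending x to m (Yoneda) *)
Definition is_Pe (Delta : {set 'I_n}) (i : 'I_n) (P : rep) : Prop :=
  is_mod Delta P /\
  exists x : 'rV[K]_(dimv P i),
    forall (M : rep), is_mod Delta M -> forall m : 'rV[K]_(dimv M i),
      (exists f : homT P M, is_hom f /\ x *m f i = m) /\
      (forall f g : homT P M, is_hom f -> is_hom g ->
         x *m f i = m -> x *m g i = m -> forall j, f j = g j).

Definition is_proj (Delta : {set 'I_n}) (P : rep) : Prop :=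
  is_mod Delta P /\
  forall (X Y : rep) (g : homT X Y) (h : homT P Y),
    is_mod Delta X -> is_mod Delta Y ->
    is_hom g -> hom_surj g -> is_hom h ->
    exists h' : homT P X, is_hom h' /\ forall j, h' j *m g j = h j.

Definition proj_cover (Delta : {set 'I_n}) (P M : rep) (p : homT P M) : Prop :=
  is_proj Delta P /\ is_hom p /\ hom_surj p /\
  forall U : subT P, is_sub U ->
    (forall j, (U j + kermx (p j) == 1%:M)%MS) -> forall j, (U j == 1%:M)%MS.

End Nakayama.

(* Main.v *)
Require Import Defs.
From HB Require Import structures.
From mathcomp Require Import all_boot all_algebra.
From mathcomp Require Import zify.
From Stdlib Require Import Lia.
Set Implicit Arguments. Unset Strict Implicit. Unset Printing Implicit Defensive.
Import GRing.Theory.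
Local Open Scope ring_scope.
Local Notation dimv := Defs.dimv.
Local Notation mor := Defs.mor.

Section Work1.
Variable K : fieldType.
Variable n : nat.
Implicit Types (M N : rep K n).
Local Notation sg := (@sigma n).

Lemma iter_val t (v : 'I_n) : val (iter t sg v) = ((v + t) %% n)%N.
Proof.
elim: t => [|t IH] /=; first by rewrite addn0 modn_small.
rewrite /sigma /ordS /= IH.
by rewrite -[((_ %% n).+1)]addn1 modnDml addn1 addnS.
Qed.

Lemma iter_inj t : injective (iter t sg).
Proof.
elim: t => [//|t IH] a b /= h; apply: IH; exact: (ordS_inj h).
Qed.

Lemma iter_n (v : 'I_n) : iter n sg v = v.
Proof. by apply: val_inj; rewrite iter_val modnDr modn_small. Qed.

Lemma sigma_surj (u : 'I_n) : exists u', @sigma n u' = u.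
Proof. by exists (ord_pred u); rewrite /sigma ord_predK. Qed.

Definition castm M (a b : 'I_n) : 'M[K]_(dimv M a, dimv M b) :=
  \matrix_(x, y) ((a == b) && (val x == val y))%:R.

Lemma castm_id M a : castm M a a = 1%:M.
Proof. by apply/matrixP => x y; rewrite !mxE eqxx. Qed.

Lemma castm_neq M a b : a != b -> castm M a b = 0.
Proof. by move=> h; apply/matrixP => x y; rewrite !mxE (negPf h). Qed.

Lemma castm_mor M a b :
  castm M a b *m mor M b = mor M a *m castm M (sg a) (sg b).
Proof.
case: (eqVneq a b) => [<-|h]; first by rewrite !castm_id mul1mx mulmx1.
rewrite !castm_neq ?mul0mx ?mulmx0 //.
by apply: contra h => /eqP /ordS_inj ->.
Qed.

Lemma castm_path M s a b :
  castm M a b *m pathmx M s b = pathmx M s a *m castm M (iter s sg a) (iter s sg b).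
Proof.
case: (eqVneq a b) => [<-|h]; first by rewrite !castm_id mul1mx mulmx1.
rewrite !castm_neq ?mul0mx ?mulmx0 //.
by apply: contra h => /eqP /iter_inj ->.
Qed.

Lemma castm_fam M N (f : forall v, 'M[K]_(dimv M v, dimv N v)) a b :
  castm M a b *m f b = f a *m castm N a b.
Proof.
case: (eqVneq a b) => [<-|h]; first by rewrite !castm_id mul1mx mulmx1.
by rewrite !castm_neq ?mul0mx ?mulmx0.
Qed.

Lemma castmM M a b c : a = b -> castm M a b *m castm M b c = castm M a c.
Proof. by move=> <-; rewrite castm_id mul1mx. Qed.

Lemma castmMr M a b c : b = c -> castm M a b *m castm M b c = castm M a c.
Proof. by move=> <-; rewrite castm_id mulmx1. Qed.

Lemma castmK M a b : a = b -> castm M a b *m castm M b a = 1%:M.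
Proof. by move=> <-; rewrite castm_id mulmx1. Qed.

Lemma castm_sub M m (F : forall v, 'M[K]_(m, dimv M v)) a b :
  (F a *m castm M a b <= F b)%MS.
Proof.
case: (eqVneq a b) => [<-|h]; first by rewrite castm_id mulmx1.
by rewrite castm_neq ?mulmx0 ?sub0mx.
Qed.

Lemma pathmxD M s t v :
  pathmx M s v *m pathmx M t (iter s sg v) =
  pathmx M (t + s) v *m castm M (iter (t + s) sg v) (iter t sg (iter s sg v)).
Proof.
elim: t => [|t IH] /=; first by rewrite castm_id !mulmx1.
by rewrite mulmxA IH -mulmxA castm_mor mulmxA.
Qed.

Lemma pathmxSl M s v :
  pathmx M s.+1 v = mor M v *m pathmx M s (sg v) *m castm M (iter s sg (sg v)) (iter s.+1 sg v).
Proof.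
elim: s => [|s IH]; first by rewrite /= castm_id mul1mx !mulmx1.
have -> : pathmx M s.+2 v = pathmx M s.+1 v *m mor M (iter s.+1 sg v) by [].
rewrite IH -!mulmxA castm_mor.
by rewrite !mulmxA.

Qed.

Lemma pathmx_zeroS M s m v : pathmx M s v = 0 -> pathmx M (m + s) v = 0.
Proof. by move=> h; elim: m => [|m IH] //=; rewrite IH mul0mx. Qed.

Lemma pathmx_zero M s s' v : pathmx M s v = 0 -> (s <= s')%N -> pathmx M s' v = 0.
Proof. by move=> h /subnK <-; apply: pathmx_zeroS. Qed.

Lemma vpath_zero M s s' v (y : 'rV[K]_(dimv M v)) :
  y *m pathmx M s v = 0 -> (s <= s')%N -> y *m pathmx M s' v = 0.
Proof.
move=> h /subnK <-; elim: (s' - s)%N => [|m IH] //=.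
by rewrite mulmxA IH mul0mx.
Qed.

Lemma hom_path M N (f : homT M N) s v : is_hom f ->
  f v *m pathmx N s v = pathmx M s v *m f (iter s sg v).
Proof.
move=> hf; elim: s => [|s IH] /=; first by rewrite mulmx1 mul1mx.
by rewrite mulmxA IH -!mulmxA hf.
Qed.

End Work1.


Section Work2.
Variable K : fieldType.
Variable n : nat.
Hypothesis hn : (2 <= n)%N.
Variable Delta : {set 'I_n}.
Hypothesis hDelta : Delta != set0.
Implicit Types (M N : rep K n).
Local Notation sg := (@sigma n).

Definition rmin (j : 'I_n) : nat := find (fun t => iter t sg j \in Delta) (iota 0 n).

Lemma rmin_has j : has (fun t => iter t sg j \in Delta) (iota 0 n).
Proof.
case/set0Pn: hDelta => l hl; apply/hasP.
have hn0 : (0 < n)%N by apply: leq_trans hn.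
exists ((l + (n - j)) %% n)%N; first by rewrite mem_iota add0n ltn_mod hn0.
suff -> : iter ((l + (n - j)) %% n) sg j = l by [].
apply: val_inj; rewrite iter_val /= modnDmr addnCA subnKC ?(ltnW (ltn_ord j)) //.
by rewrite modnDr modn_small.
Qed.

Lemma rmin_lt j : (rmin j < n)%N.
Proof. by have := rmin_has j; rewrite has_find size_iota. Qed.

Lemma rmin_in j : iter (rmin j) sg j \in Delta.
Proof.
have := nth_find 0%N (rmin_has j); by rewrite nth_iota ?rmin_lt.
Qed.

Lemma rmin_min j t : iter t sg j \in Delta -> (rmin j <= t)%N.
Proof.
move=> h; rewrite leqNgt; apply/negP => lt.
have := before_find 0%N lt; rewrite nth_iota ?h //.
exact: ltn_trans lt (rmin_lt j).
Qed.

Lemma mod_path0 M j : is_mod Delta M -> pathmx M (n + rmin j) j = 0.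
Proof.
move=> hM.
have := pathmxD M (rmin j) n j; rewrite (hM _ (rmin_in j)) mulmx0 => /esym h.
have := congr1 (mulmx^~ (castm M (iter n sg (iter (rmin j) sg j)) (iter (n + rmin j) sg j))) h.
by rewrite mul0mx -mulmxA castmK ?mulmx1 // iterD.
Qed.

Lemma mod_pathz M v s : is_mod Delta M -> (2 * n <= s.+1)%N -> pathmx M s v = 0.
Proof.
move=> hM hs; apply: (pathmx_zero (mod_path0 v hM)).
have := rmin_lt v; lia.
Qed.

End Work2.

Section Work2b.
Variable K : fieldType.
Variable n : nat.
Implicit Types (M N : rep K n).
Local Notation sg := (@sigma n).
Lemma sum_eqn L p (F : nat -> K) :
  \sum_(b < L) ((val b == p)%:R * F b) = if (p < L)%N then F p else 0.
Proof.
case: ifP => hp.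
  rewrite (bigD1 (Ordinal hp)) //= eqxx mul1r big1 ?addr0 // => b hb.
  have : val b != p by apply: contra hb => /eqP h; apply/eqP/val_inj.
  by move/negPf ->; rewrite mul0r.
rewrite big1 // => b _; have : val b != p.
  by apply/eqP => h; move: (ltn_ord b); rewrite h hp.
by move/negPf ->; rewrite mul0r.
Qed.

Lemma sum_eqnv L m p (F : nat -> 'rV[K]_m) :
  \sum_(b < L) ((val b == p)%:R *: F b) = if (p < L)%N then F p else 0.
Proof.
case: ifP => hp.
  rewrite (bigD1 (Ordinal hp)) //= eqxx scale1r big1 ?addr0 // => b hb.
  have : val b != p by apply: contra hb => /eqP h; apply/eqP/val_inj.
  by move/negPf ->; rewrite scale0r.
rewrite big1 // => b _; have : val b != p.
  by apply/eqP => h; move: (ltn_ord b); rewrite h hp.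
by move/negPf ->; rewrite scale0r.
Qed.

Definition Mod (j : 'I_n) (L : nat) : rep K n :=
  @Rep K n (fun _ => L)
    (fun v => \matrix_(a < L, b < L) ((val b == (val a).+1) && (iter a sg j == v))%:R).

Lemma Mod_path j L s v :
  pathmx (Mod j L) s v =
  \matrix_(a < L, b < L) ((val b == a + s)%N && ((s == 0)%N || (iter a sg j == v)))%:R.
Proof.
elim: s => [|s IH].
  by apply/matrixP => a b; rewrite /= !mxE addn0 andbT eq_sym.
apply/matrixP => a c.
have -> : pathmx (Mod j L) s.+1 v = pathmx (Mod j L) s v *m mor (Mod j L) (iter s sg v) by [].
rewrite IH !mxE /=.
under eq_bigr => b _ do rewrite !mxE -mulnb natrM -mulrA.
rewrite (sum_eqn L (a + s)%N (fun b => (((s == 0)%N || (iter a sg j == v))%:R *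
   ((c == b.+1 :> nat) && (iter b sg j == iter s sg v))%:R))).
case: ifP => has.
  rewrite -natrM; congr (_%:R).
  rewrite addnC iterD (inj_eq (@iter_inj _ s)) addnS addnC.
  by case: (iter a sg j == v); rewrite ?andbF ?orbT ?muln0 ?mul1n.
have : (c != (a + s.+1)%N :> nat).
  apply/eqP => h; move: (ltn_ord c) has; rewrite h /=; lia.
by move/negPf ->.
Qed.

Lemma Mod_path0 j L v : pathmx (Mod j L) L v = 0.
Proof.
rewrite Mod_path; apply/matrixP => a b; rewrite !mxE.
have : (val b != a + L)%N.
  by apply/eqP => h; move: (ltn_ord b); rewrite h ltnNge leq_addl.
by move/negPf ->.
Qed.

Local Unset Implicit Arguments.
Definition Gm M (j : 'I_n) (T : nat) (m : 'rV[K]_(dimv M j)) (v : 'I_n) : 'M[K]_(T, dimv M v) :=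
  \matrix_(a < T) (m *m pathmx M a j *m castm M (iter a sg j) v).
Local Set Implicit Arguments.

Lemma Gm_row M j T m v (a : 'I_T) :
  row a (Gm M j T m v) = m *m pathmx M a j *m castm M (iter a sg j) v.
Proof. by rewrite rowK. Qed.

Lemma Gm_path M j T m v s (a : 'I_T) :
  row a (Gm M j T m v *m pathmx M s v) =
  m *m pathmx M (s + a) j *m castm M (iter (s + a) sg j) (iter s sg v).
Proof.
rewrite row_mul Gm_row -!mulmxA castm_path.
rewrite [pathmx M a j *m _]mulmxA pathmxD.
by rewrite -!mulmxA castmM // iterD.
Qed.

Lemma Gm_hom M j T m : m *m pathmx M T j = 0 ->
  is_hom (Gm M j T m : homT (Mod j T) M).
Proof.
move=> hT v; apply/row_matrixP => a.
rewrite row_mul mulmx_sum_row.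
under eq_bigr => b _ do rewrite !mxE Gm_row -mulnb natrM -scalerA.
rewrite (sum_eqnv T a.+1 (fun b => (iter a sg j == v)%:R *:
   (m *m pathmx M b j *m castm M (iter b sg j) (sg v)))).
rewrite [in RHS]row_mul [in RHS]Gm_row -[in RHS]mulmxA castm_mor [in RHS]mulmxA.
have -> : m *m pathmx M a j *m mor M (iter a sg j) = m *m pathmx M a.+1 j by rewrite mulmxA.
case: (eqVneq (iter a sg j) v) => [e|ne].
  rewrite scale1r; case: ifP => // hT2.
  have e2 : a.+1 = T by apply/eqP; rewrite eqn_leq ltn_ord leqNgt hT2.
  have h0 : m *m pathmx M a.+1 j = 0 by rewrite e2.
  by rewrite h0 mul0mx.
rewrite scale0r castm_neq ?mulmx0; last by apply: contra ne => /eqP/ordS_inj ->.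
by case: ifP.
Qed.

Lemma Gm_row0 M j T m (h : (0 < T)%N) : row (Ordinal h) (Gm M j T m j) = m.
Proof. by rewrite Gm_row /= castm_id !mulmx1. Qed.

End Work2b.

Section Work2c.
Variable K : fieldType.
Variable n : nat.
Hypothesis hn : (2 <= n)%N.
Variable Delta : {set 'I_n}.
Hypothesis hDelta : Delta != set0.
Local Notation sg := (@sigma n).
Local Notation rmin := (rmin Delta).
Local Notation Mod := (Mod K).
Lemma Mod_is_mod j L : (L <= n + rmin j)%N -> is_mod Delta (Mod j L).
Proof.
move=> hL l hl; rewrite Mod_path; apply/matrixP => a b; rewrite !mxE.
have -> : (n == 0)%N = false by case: n hn.
case: (eqVneq (iter a sg j) l) => [e|]; rewrite ?andbF //.
have : (val b != a + n)%N.
  have hr : (rmin j <= a)%N.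
    by apply: (rmin_min hn hDelta); rewrite e.
  by apply/eqP => h; move: (ltn_ord b); rewrite h /=; move=> h2; have := leq_trans h2 hL; rewrite addnC ltn_add2l ltnNge hr.
by move/negPf ->.
Qed.

Lemma Mod_row0 (j : 'I_n) L s (h : (s < L)%N) :
  row (Ordinal (leq_ltn_trans (leq0n s) h)) (pathmx (Mod j L) s j) = delta_mx 0 (Ordinal h).
Proof.
rewrite Mod_path; apply/rowP => b; rewrite !mxE /= add0n eqxx orbT andbT.
by [].
Qed.

End Work2c.


Section Work3.
Variable K : fieldType.
Variable n : nat.
Hypothesis hn : (2 <= n)%N.
Variable Delta : {set 'I_n}.
Hypothesis hDelta : Delta != set0.
Implicit Types (M N P Q X Y : rep K n).
Local Notation sg := (@sigma n).
Local Notation rmin := (rmin Delta).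
Local Notation Gm := (Gm K n).
Local Notation Mod := (Mod K).

Lemma part1 (i : 'I_n) k (X : rep K n) : isL Delta i k X -> (0 < k < 2 * n)%N.
Proof.
case=> hX [_ [_ [hk [_ hmin]]]].
rewrite hk /=; rewrite ltnNge; apply/negP => hk2.
apply: (hmin (2 * n).-1).
  apply/andP; split; first by lia.
  by apply: leq_trans hk2; lia.
move=> v; apply: (mod_pathz hn hDelta v hX); lia.
Qed.

Lemma loewy_uniq M a b : loewy_length M a -> loewy_length M b -> a = b.
Proof.
move=> [ha [za ma]] [hb [zb mb]].
case: (ltngtP a b) => // h.
  by case: (mb a); rewrite ?ha ?h.
by case: (ma b); rewrite ?hb ?h.
Qed.

Lemma core2 (j : 'I_n) P : is_Pe Delta j P -> loewy_length P (n + rmin j).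
Proof.
move=> [hP [x hY]].
set L := (n + rmin j)%N.
have hL0 : (0 < L)%N by rewrite /L; lia.
have hModm : is_mod Delta (Mod j L) by apply: Mod_is_mod.
pose e0 : 'rV[K]_L := delta_mx 0 (Ordinal hL0).
have [[f [hf hxf]] _] := hY (Mod j L) hModm e0.
pose g : homT (Mod j L) P := Gm P j L x.
have hxL : x *m pathmx P L j = 0 by rewrite /L (mod_path0 hn hDelta j hP) mulmx0.
have hg : is_hom g by apply: Gm_hom.
have hfg : forall v, f v *m g v = 1%:M.
  have [_ uniq] := hY P hP x.
  apply: (uniq (fun v => f v *m g v) (fun v => 1%:M)).
  - by move=> v; rewrite mulmxA hf -!mulmxA hg.
  - by move=> v; rewrite mulmx1 mul1mx.
  - rewrite mulmxA hxf /e0 -rowE; exact: Gm_row0.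
  - by rewrite mulmx1.
split; first by [].
split.
  move=> v; rewrite -[pathmx P L v]mul1mx -(hfg v) -mulmxA hom_path //.
  by rewrite Mod_path0 mul0mx mulmx0.
move=> s /andP [hs1 hs2] hz.
have hL1 : (L.-1 < L)%N by rewrite prednK.
have h0 : pathmx P L.-1 j = 0 by apply: (pathmx_zero (hz j)); lia.
have := congr1 (fun A => x *m A *m f (iter L.-1 sg j)) h0.
rewrite /= mulmx0 mul0mx -mulmxA -(hom_path _ _ hf) mulmxA hxf /e0 -rowE.
have -> : Ordinal hL0 = Ordinal (leq_ltn_trans (leq0n L.-1) hL1) by apply: val_inj.
rewrite Mod_row0 => /matrixP /(_ 0 (Ordinal hL1)); rewrite !mxE !eqxx /=.
by move/eqP; rewrite oner_eq0.
Qed.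

End Work3.


Section Work4.
Variable K : fieldType.
Variable n : nat.
Implicit Types (M N P Q X Y : rep K n).
Local Notation sg := (@sigma n).

Definition nbmx d (b : bool) (phi : 'M[K]_(d, 1)) : 'M[K]_(d, nat_of_bool b) :=
  if b return 'M[K]_(d, nat_of_bool b) then phi else 0.

Lemma nbmx_rank d b (phi : 'M[K]_(d, 1)) :
  \rank (nbmx b phi) = if b then \rank phi else 0%N.
Proof. by case: b => //=; rewrite mxrank0. Qed.

Lemma nbmx_mul m d b (B : 'M[K]_(m, d)) (phi : 'M[K]_(d, 1)) :
  B *m nbmx b phi = nbmx b (B *m phi).
Proof. by case: b => //=; rewrite mulmx0. Qed.

Lemma nbmx0 d b : nbmx b (0 : 'M[K]_(d, 1)) = 0.
Proof. by case: b. Qed.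

Lemma nbmx_ker d b (phi : 'M[K]_(d, 1)) :
  (kermx (nbmx b phi) == if b then kermx phi else 1%:M)%MS.
Proof. rewrite /nbmx; case: b => /=; first by apply/eqmxP. by apply/eqmxP; apply: kermx0. Qed.

Lemma nb_true d (b : bool) (A : 'M[K]_(d, nat_of_bool b)) : b -> row_full A ->
  exists phi : 'M[K]_(d, 1), (kermx A == kermx phi)%MS /\ \rank phi = 1%N.
Proof. by case: b A => // A _ /eqP h; exists A; rewrite submx_refl. Qed.

Lemma nb_false d (b : bool) (A : 'M[K]_(d, nat_of_bool b)) : ~~ b ->
  (kermx A == 1%:M)%MS.
Proof.
case: b A => // A _; rewrite (thinmx0 A).
by apply/eqmxP; apply: kermx0.
Qed.

Lemma top_unpack M w0 : top_is (sg w0) M ->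
  exists phi : 'M[K]_(dimv M (sg w0), 1),
    [/\ \rank phi = 1%N, (kermx phi == mor M w0)%MS &
        forall w, sg w != sg w0 -> (1%:M <= mor M w)%MS].
Proof.
move=> [f [hf [hs hk]]].
have [phi [e1 e2]] := @nb_true _ _ (f (sg w0)) (eqxx _) (hs _).
exists phi; split => //.
  apply/eqmxP; exact: eqmx_trans (eqmx_sym (eqmxP e1)) (eqmxP (hk w0)).
move=> w hw; move: (hk w) => /eqmxP <-.
have := @nb_false _ _ (f (sg w)) hw => /eqmxP ->.
exact: submx_refl.
Qed.

Lemma top_build M w0 (phi : 'M[K]_(dimv M (sg w0), 1)) :
  \rank phi = 1%N -> (kermx phi == mor M w0)%MS ->
  (forall w, sg w != sg w0 -> (1%:M <= mor M w)%MS) -> top_is (sg w0) M.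
Proof.
move=> hr hk hw.
exists (fun v => nbmx (v == sg w0) (castm M v (sg w0) *m phi)).
split; [|split].
- move=> w /=; rewrite nbmx_mul mulmx0.
  case: (eqVneq (sg w) (sg w0)) => [e|ne]; last by rewrite castm_neq ?mulmx0 ?mul0mx ?nbmx0.
  have ew : w = w0 by apply: ordS_inj.
  subst w; rewrite castm_id mul1mx.
  have -> : mor M w0 *m phi = 0 by apply/eqP; rewrite -sub_kermx; move/eqmxP: hk => ->.
  by rewrite nbmx0.
- move=> v; rewrite /row_full nbmx_rank /=; case: (eqVneq v (sg w0)) => [e|ne] //=.
  by subst v; rewrite castm_id mul1mx hr.
- move=> w; apply/eqmxP.
  apply: (eqmx_trans (eqmxP (nbmx_ker (sg w == sg w0) (castm M (sg w) (sg w0) *m phi)))).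
  apply/eqmxP.
  case: (eqVneq (sg w) (sg w0)) => [e|ne] /=.
    have ew : w = w0 by apply: ordS_inj.
    by subst w; rewrite castm_id mul1mx.
  apply/andP; split; last exact: submx1.
  exact: (hw _ ne).
Qed.

End Work4.


Section Work5.
Variable K : fieldType.
Variable n : nat.
Hypothesis hn : (2 <= n)%N.
Variable Delta : {set 'I_n}.
Hypothesis hDelta : Delta != set0.
Implicit Types (M N P Q X Y : rep K n).
Local Notation sg := (@sigma n).
Local Notation rmin := (rmin Delta).
Local Notation Gm := (Gm K n).
Local Notation Mod := (Mod K).

Lemma rank_top d (phi : 'M[K]_(d, 1)) (y : 'rV[K]_d) :
  \rank phi = 1%N -> y *m phi != 0 -> (1%:M <= y + kermx phi)%MS.
Proof.
move=> hr hy; rewrite sub1mx /row_full.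
have hd : (1 <= d)%N by rewrite -hr rank_leq_row.
have ry : \rank y = 1%N by rewrite rank_rV; apply/eqP; rewrite eqb1; apply: contra hy => /eqP ->; rewrite mul0mx.
have rc : \rank (y :&: kermx phi)%MS = 0%N.
  have := rank_leq_row (y :&: kermx phi)%MS.
  have : (\rank (y :&: kermx phi)%MS <= \rank y)%N by apply: mxrankS; apply: capmxSl.
  rewrite ry leq_eqVlt ltnS leqn0 => /orP [/eqP h _|/eqP //].
  have : (y <= y :&: kermx phi)%MS.
    by rewrite -(mxrank_leqif_sup (capmxSl y (kermx phi))) h ry.
  rewrite sub_capmx submx_refl /= sub_kermx => h2.
  by move: hy; rewrite h2.
have := mxrank_sum_cap y (kermx phi); rewrite rc addn0 ry mxrank_ker hr => ->.
by rewrite add1n subn1 prednK.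
Qed.

Lemma pullback M (hM : is_mod Delta M) (S R : forall v, 'M[K]_(dimv M v)) :
  (forall u s v, (R u *m pathmx M s u *m castm M (iter s sg u) v <= R v)%MS) ->
  (forall w, (S (sg w) <= R (sg w) + S w *m mor M w)%MS) ->
  forall v, (S v <= R v)%MS.
Proof.
move=> hR hS.
have claim : forall s v (e : 'rV[K]_(dimv M v)), (e <= S v)%MS ->
   exists u (e' : 'rV[K]_(dimv M u)), [/\ iter s sg u = v, (e' <= S u)%MS &
       (e - e' *m pathmx M s u *m castm M (iter s sg u) v <= R v)%MS].
  elim=> [|s IH] v e he.
    exists v, e; split => //=.
    by rewrite mulmx1 castm_id mulmx1 subrr sub0mx.
  have [u [e' [eu he' hr]]] := IH v e he.
  have [u' eu'] := sigma_surj u; subst u.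
  have := hS u'; move: he' => /submx_trans H /H /sub_addsmxP [[c1 c2] /= ec].
  exists u', (c2 *m S u'); split.
  - by rewrite -iterS iterSr.
  - exact: submxMl.
  have -> : e - c2 *m S u' *m pathmx M s.+1 u' *m castm M (iter s.+1 sg u') v =
     (e - e' *m pathmx M s (sg u') *m castm M (iter s sg (sg u')) v) +
     c1 *m (R (sg u') *m pathmx M s (sg u') *m castm M (iter s sg (sg u')) v).
    have hc : castm M (iter s sg (sg u')) (iter s.+1 sg u') *m castm M (iter s.+1 sg u') v
       = castm M (iter s sg (sg u')) v by apply: castmM; rewrite iterSr.
    rewrite ec pathmxSl -!mulmxA hc !mulmxDl -!mulmxA.
    by rewrite opprD addrA addrAC subrK.
  apply: addmx_sub => //.
  by apply: submx_trans (submxMl _ _) _.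
move=> v; apply/row_subP => a.
have [u [e' [eu _ hr]]] := claim (2 * n)%N v (row a (S v)) (row_sub _ _).
by move: hr; rewrite (mod_pathz hn hDelta u hM) ?mulmx0 ?mul0mx ?subr0 //; lia.
Qed.

Lemma Gm_closed M j T y (hyT : y *m pathmx M T j = 0) u s v :
  (<<Gm M j T y u>>%MS *m pathmx M s u *m castm M (iter s sg u) v <= <<Gm M j T y v>>%MS)%MS.
Proof.
have hom := Gm_hom hyT.
rewrite genmxE -mulmxA (eqmxMr _ (genmxE _)) mulmxA (hom_path _ _ hom) -mulmxA.
apply: submx_trans (submxMl _ _) _; exact: castm_sub.
Qed.

Lemma span_top M w0 (hM : is_mod Delta M) (phi : 'M[K]_(dimv M (sg w0), 1))
  (hr : \rank phi = 1%N) (hk : (kermx phi == mor M w0)%MS)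
  (hw : forall w, sg w != sg w0 -> (1%:M <= mor M w)%MS)
  (y : 'rV[K]_(dimv M (sg w0))) (hy : y *m phi != 0) T (hT0 : (0 < T)%N)
  (hyT : y *m pathmx M T (sg w0) = 0) :
  forall v, (1%:M <= Gm M (sg w0) T y v)%MS.
Proof.
move=> v; suff : (1%:M <= <<Gm M (sg w0) T y v>>)%MS by rewrite genmxE.
apply: (pullback hM (S := fun v => (1%:M : 'M[K]_(dimv M v))) (R := fun v => <<Gm M (sg w0) T y v>>%MS)).
  by move=> u s v'; apply: Gm_closed.
move=> w /=; rewrite mul1mx.
case: (eqVneq (sg w) (sg w0)) => [e|ne]; last first.
  by apply: submx_trans (hw _ ne) _; apply: addsmxSr.
have ew : w = w0 by apply: ordS_inj.
subst w.
apply: submx_trans (rank_top hr hy) _.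
apply: addsmxS; last by move/eqmxP: hk => ->.
rewrite genmxE -{1}(Gm_row0 y hT0); exact: row_sub.
Qed.

Lemma LI M j (z : 'rV[K]_(dimv M j)) L (hL : (0 < L)%N)
  (hz1 : z *m pathmx M L.-1 j != 0) (hz : z *m pathmx M L j = 0)
  T v (c : 'rV[K]_T) (hc : c *m Gm M j T z v = 0) :
  forall t : 'I_T, (t < L)%N -> iter t sg j = v -> c 0 t = 0.
Proof.
suff H : forall k (t : 'I_T), (t < k)%N -> (t < L)%N -> iter t sg j = v -> c 0 t = 0.
  by move=> t; apply: (H t.+1).
elim=> [//|k IH] t htk htL hv.
case: (ltnP t k) => [h|hkt]; first exact: IH.
set s := (L.-1 - t)%N.
have h0 := congr1 (mulmx^~ (pathmx M s v)) hc.
rewrite /= mul0mx -mulmxA mulmx_sum_row in h0.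
rewrite (bigD1 t) //= big1 ?addr0 in h0; last first.
  move=> a hat; rewrite Gm_path.
  case: (ltnP t a) => hta.
    rewrite (vpath_zero hz) ?mul0mx ?scaler0 //; rewrite /s; lia.
  have hat' : (a < t)%N by rewrite ltn_neqAle hta andbT; apply: contra hat => /eqP h; apply/eqP/val_inj.
  case: (eqVneq (iter a sg j) v) => [e|ne].
    by rewrite IH ?scale0r //; lia.
  rewrite castm_neq ?mulmx0 ?scaler0 //.
  by rewrite iterD; apply: contra ne => /eqP /iter_inj ->.
move: h0; rewrite Gm_path.
have e : (s + t = L.-1)%N by rewrite /s; lia.
have ev : iter (s + t) sg j = iter s sg v by rewrite iterD hv.
move/eqP; rewrite scaler_eq0 => /orP [/eqP //|/eqP h1].
have := congr1 (mulmx^~ (castm M (iter s sg v) (iter (s + t) sg j))) h1.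
rewrite mul0mx -mulmxA castmK // mulmx1.
by rewrite e => h2; move: hz1; rewrite h2 eqxx.
Qed.

Lemma Gm_rowS M j T z w (a : 'I_T) a' : val a = a'.+1 ->
  row a (Gm M j T z (sg w)) = (z *m pathmx M a' j *m castm M (iter a' sg j) w) *m mor M w.
Proof.
move=> ea; rewrite Gm_row.
have -> : z *m pathmx M a j *m castm M (iter a sg j) (sg w) =
   z *m pathmx M a'.+1 j *m castm M (iter a'.+1 sg j) (sg w) by rewrite ea.
by rewrite /= -!mulmxA castm_mor.
Qed.

Lemma Gm_le M j T z w :
  (Gm M j T z (sg w) <= z *m castm M j (sg w) + mor M w)%MS.
Proof.
apply/row_subP => a; case: a => [[|a'] ha].
  rewrite Gm_row /= mulmx1; exact: addsmxSl.
rewrite (@Gm_rowS _ _ _ _ _ _ a') //; apply: submx_trans (submxMl _ _) _; exact: addsmxSr.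
Qed.

Lemma cyclicC M j (hM : is_mod Delta M) (z : 'rV[K]_(dimv M j)) L (hL : (0 < L)%N)
  (hz1 : z *m pathmx M L.-1 j != 0) (hz : z *m pathmx M L j = 0)
  T (hT0 : (0 < T)%N) (hspan : forall v, (1%:M <= Gm M j T z v)%MS) :
  loewy_length M L /\ top_is j M.
Proof.
have Jz : Jpow_zero M L.
  move=> v; have h : Gm M j T z v *m pathmx M L v = 0.
    apply/row_matrixP => a; rewrite row0 Gm_path (vpath_zero hz) ?mul0mx //.
    exact: leq_addr.
  have [D eD] := submxP (hspan v).
  by rewrite -[pathmx M L v]mul1mx eD -mulmxA h mulmx0.
split.
  split=> //; split=> // s /andP [h1 h2] hs.
  have : pathmx M L.-1 j = 0 by apply: (pathmx_zero (hs j)); lia.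
  by move=> h; move: hz1; rewrite h mulmx0 eqxx.
have [w0 e] := sigma_surj j; subst j.
have hm : mor M w0 *m pathmx M L.-1 (sg w0) = 0.
  have := pathmxSl M L.-1 w0; rewrite prednK // (Jz w0) => /esym h.
  have := congr1 (mulmx^~ (castm M (iter L sg w0) (iter L.-1 sg (sg w0)))) h.
  by rewrite mul0mx -mulmxA castmK ?mulmx1 // -iterSr prednK.
have hzn : ~~ (z <= mor M w0)%MS.
  apply/negP => /submxP [D eD]; move: hz1; by rewrite eD -mulmxA hm mulmx0 eqxx.
set C := cokermx (mor M w0).
have hzC : z *m C != 0 by apply: contra hzn; rewrite submxE.
set phi := C *m pinvmx (z *m C).
have hzphi : z *m phi != 0.
  rewrite /phi mulmxA; apply: contra hzC => /eqP h.
  by rewrite -(mulmxKpV (submx_refl (z *m C))) h mul0mx.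
have hphi0 : phi != 0 by apply: contra hzphi => /eqP ->; rewrite mulmx0.
have hr : \rank phi = 1%N.
  apply/eqP; rewrite eqn_leq rank_leq_col lt0n mxrank_eq0 hphi0.
  done.
apply: (top_build hr).
- have hsub : (mor M w0 <= kermx phi)%MS by rewrite sub_kermx /phi mulmxA mulmx_coker mul0mx.
  apply/andP; split => //.
  rewrite -(mxrank_leqif_sup hsub).2 eqn_leq mxrankS //=.
  rewrite mxrank_ker hr.
  have h1 : (1%:M <= z + mor M w0)%MS.
    apply: submx_trans (hspan (sg w0)) _; move: (Gm_le T z w0).
    by rewrite castm_id mulmx1.
  have := mxrankS h1; rewrite mxrank1 => h2.
  have h3 := (mxrank_adds_leqif z (mor M w0)).1.
  have h4 := rank_leq_row z.
  lia.
- move=> w hw.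
  have := submx_trans (hspan (sg w)) (Gm_le T z w).
  by rewrite castm_neq ?mulmx0 ?adds0mx // eq_sym.
Qed.

Lemma decomp_zero M w0 (hM : is_mod Delta M) (U V : subT M) (hU : is_sub U) (hV : is_sub V)
  (hd : forall i, (U i + V i == 1%:M)%MS && (U i :&: V i == (0 : 'M[K]_(dimv M i)))%MS)
  (hw : forall w, sg w != sg w0 -> (1%:M <= mor M w)%MS)
  (hV0 : (V (sg w0) <= mor M w0)%MS) : forall v, (V v == (0 : 'M[K]_(dimv M v)))%MS.
Proof.
have H : forall v, (V v <= (0 : 'M[K]_(dimv M v)))%MS.
  apply: (pullback hM (S := V) (R := fun v => (0 : 'M[K]_(dimv M v)))).
    by move=> u s v; rewrite !mul0mx sub0mx.
  move=> w.
  have hVm : (V (sg w) <= mor M w)%MS.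
    case: (eqVneq (sg w) (sg w0)) => [e|ne].
      have ew : w = w0 by apply: ordS_inj.
      by subst w.
    exact: submx_trans (submx1 _) (hw _ ne).
  have h1 : (mor M w <= U w *m mor M w + V w *m mor M w)%MS.
    rewrite -(addsmxMr (U w) (V w) (mor M w)) -{1}[mor M w]mul1mx; apply: submxMr.
    by case/andP: (hd w) => /andP [_ h] _.
  have h2 : (V (sg w) <= V (sg w) :&: (U w *m mor M w + V w *m mor M w))%MS.
    by rewrite sub_capmx submx_refl (submx_trans hVm h1).
  rewrite -(matrix_modr _ (hV w)) in h2.
  apply: submx_trans h2 _; apply: addsmxS => //.
  case/andP: (hd (sg w)) => _ /andP [h3 _].
  rewrite capmxC in h3; apply: submx_trans _ h3.
  exact: capmxS (submx_refl _) (hU w).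
by move=> v; apply/andP; split; [apply: H | apply: sub0mx].
Qed.

Lemma top_indec M j (hM : is_mod Delta M) : top_is j M -> indecomposable M.
Proof.
have [w0 e] := sigma_surj j; subst j.
move=> /top_unpack [phi [hr hk hw]].
have hd1 : (1 <= dimv M (sg w0))%N by rewrite -hr rank_leq_row.
split; first by exists (sg w0).
move=> U V hU hV hd.
case: (boolP (U (sg w0) <= mor M w0)%MS) => hUi.
  left; apply: (decomp_zero hM hV hU _ hw hUi).
  by move=> i; rewrite addsmxC capmxC.
case: (boolP (V (sg w0) <= mor M w0)%MS) => hVi.
  by right; apply: (decomp_zero hM hU hV hd hw hVi).
exfalso.
set I := mor M w0.
have hI : \rank I = (dimv M (sg w0) - 1)%N.
  by rewrite -(eqmx_rank hk) mxrank_ker hr.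
have h1 : (I <= (U (sg w0) :&: I) + (V (sg w0) :&: I))%MS.
  have h0 : (I <= U w0 *m I + V w0 *m I)%MS.
    rewrite -(addsmxMr (U w0) (V w0) I) -{1}[I]mul1mx; apply: submxMr.
    by case/andP: (hd w0) => /andP [_ h] _.
  apply: submx_trans h0 _; apply: addsmxS; rewrite sub_capmx submxMl andbT.
    exact: hU.
  exact: hV.
have hlt : forall A : 'M[K]_(dimv M (sg w0)), ~~ (A <= I)%MS -> (\rank (A :&: I)%MS < \rank A)%N.
  move=> A hA; have [h2 h3] := mxrank_leqif_sup (capmxSl A I).
  rewrite ltn_neqAle h2 andbT h3; apply: contra hA => h4.
  by apply: submx_trans h4 _; apply: capmxSr.
have hUl := hlt _ hUi; have hVl := hlt _ hVi.
have h5 := (mxrank_adds_leqif (U (sg w0) :&: I)%MS (V (sg w0) :&: I)%MS).1.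
have h6 := mxrankS h1.
have h7 := mxrank_sum_cap (U (sg w0)) (V (sg w0)).
case/andP: (hd (sg w0)) => h8 /eqmx0P h9.
rewrite (eqmx_rank h8) h9 mxrank1 mxrank0 addn0 in h7.
lia.
Qed.

End Work5.


Section Work6.
Variable K : fieldType.
Variable n : nat.
Implicit Types (M N P Q X Y : rep K n).
Local Notation sg := (@sigma n).
Local Notation Gm := (Gm K n).
Local Notation Mod := (Mod K).

Lemma span_Jpow M j T (z : 'rV[K]_(dimv M j)) s :
  (forall v, (1%:M <= Gm M j T z v)%MS) -> z *m pathmx M s j = 0 -> Jpow_zero M s.
Proof.
move=> hspan hz v; have h : Gm M j T z v *m pathmx M s v = 0.
  apply/row_matrixP => a; rewrite row0 Gm_path (vpath_zero hz) ?mul0mx //.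
  exact: leq_addr.
have [D eD] := submxP (hspan v).
by rewrite -[pathmx M s v]mul1mx eD -mulmxA h mulmx0.
Qed.

Definition subrep Q (U : forall v, 'M[K]_(dimv Q v)) : rep K n :=
  @Rep K n (fun v => \rank (U v))
    (fun v => row_base (U v) *m mor Q v *m pinvmx (row_base (U (sg v)))).

Definition subiota Q (U : forall v, 'M[K]_(dimv Q v)) : homT (subrep U) Q :=
  fun v => row_base (U v).

Lemma subiota_hom Q (U : forall v, 'M[K]_(dimv Q v)) : is_sub U -> is_hom (subiota U).
Proof.
move=> hU v; rewrite /subiota /= mulmxKpV //.
rewrite !eq_row_base; apply: submx_trans (hU v).
by apply: submxMr; rewrite eq_row_base.
Qed.

Lemma subiota_inj Q (U : forall v, 'M[K]_(dimv Q v)) : hom_inj (subiota U).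
Proof. by move=> v; exact: row_base_free. Qed.

Lemma subiota_im Q (U : forall v, 'M[K]_(dimv Q v)) v : (subiota U v == U v)%MS.
Proof. by apply/eqmxP; exact: eq_row_base. Qed.

Lemma inj_cancel m d e (A B : 'M[K]_(m, d)) (C : 'M[K]_(d, e)) :
  row_free C -> A *m C = B *m C -> A = B.
Proof. by move=> hC; apply: row_free_inj. Qed.

End Work6.


Section Work7.
Variable K : fieldType.
Variable n : nat.
Hypothesis hn : (2 <= n)%N.
Variable Delta : {set 'I_n}.
Hypothesis hDelta : Delta != set0.
Implicit Types (M N P Q X Y : rep K n).
Local Notation sg := (@sigma n).
Local Notation rmin := (rmin Delta).
Local Notation Gm := (Gm K n).
Local Notation Mod := (Mod K).

Lemma part4 (i : 'I_n) P k l : is_Pe Delta i P -> loewy_length P l ->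
     (0 < k < l)%N ->
     forall X : rep K n, isL Delta i k X ->
     forall (Q : rep K n) (p : homT Q X), proj_cover Delta p ->
       exists (Y : rep K n) (iota : homT Y Q),
         isL Delta (iter k sg i) (l - k) Y /\
         is_hom iota /\ hom_inj iota /\
         (forall j, (iota j == kermx (p j))%MS).
Proof.
move=> hP hl /andP [hk0 hkl] X [hXm [_ [htop hXl]]] Q p [[hQm hproj] [hp [hps hcov]]].
have el : l = (n + rmin i)%N by apply: (loewy_uniq hl); apply: core2.
have hl0 : (0 < l)%N by lia.
have [w0 e] := sigma_surj i; subst i.
have [phi [hr hkp hw]] := top_unpack htop.
have [a ha] : exists a, row a phi != 0.
  case: (pickP (fun a => row a phi != 0)) => [a h|h]; first by exists a.
  have : phi = 0 by apply/row_matrixP => a; move: (h a) => /negbFE/eqP ->; rewrite row0.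
  by move=> e0; move: hr; rewrite e0 mxrank0.
set j := sg w0.
pose y : 'rV[K]_(dimv X j) := delta_mx 0 a.
have hy : y *m phi != 0 by rewrite /y -rowE.
have hyl : y *m pathmx X l j = 0 by rewrite el (mod_path0 hn hDelta j hXm) mulmx0.
pose Gy := Gm X j l y.
have hGy : is_hom (Gy : homT (Mod j l) X) by apply: Gm_hom.
have hspanX := span_top hn hDelta hXm hr hkp hw hy hl0 hyl.
have hyk : y *m pathmx X k j = 0 by rewrite (proj1 (proj2 hXl) j) mulmx0.
have hyk1 : y *m pathmx X k.-1 j != 0.
  apply/negP => /eqP h0.
  case: (eqVneq k.-1 0%N) => [e0|ne0].
    by move: h0 hy; rewrite e0 mulmx1 => ->; rewrite mul0mx eqxx.
  apply: (proj2 (proj2 hXl) k.-1); last exact: (span_Jpow hspanX h0).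
  apply/andP; split; lia.
pose q : 'rV[K]_(dimv Q j) := y *m pinvmx (p j).
have hq : q *m p j = y by rewrite /q mulmxKpV // submx_full.
clearbody q.
have hql : q *m pathmx Q l j = 0 by rewrite el (mod_path0 hn hDelta j hQm) mulmx0.
pose Gq := Gm Q j l q.
have hGq : is_hom (Gq : homT (Mod j l) Q) by apply: Gm_hom.
have GqP : forall v, Gq v *m p v = Gy v.
  move=> v; apply/row_matrixP => b; rewrite row_mul !Gm_row -!mulmxA castm_fam.
  by rewrite [pathmx Q b j *m _]mulmxA -(hom_path _ _ hp) !mulmxA hq.
have hspanQ : forall v, (1%:M <= Gq v)%MS.
  have hU : is_sub (fun v => <<Gq v>>%MS).
    move=> v; rewrite !genmxE (eqmxMr _ (genmxE _)) -hGq; exact: submxMl.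
  move=> v; suff : (1%:M <= <<Gq v>>)%MS by rewrite genmxE.
  suff Hs : forall v', (<<Gq v'>> + kermx (p v') == 1%:M)%MS.
    by move: (hcov _ hU Hs v) => /andP [_ ->].
  move=> v'; apply/andP; split; first exact: submx1.
  have [D eD] := submxP (submx_trans (submx1 (p v')) (hspanX v')).
  have hk' : (1%:M - D *m Gq v' <= kermx (p v'))%MS.
    by rewrite sub_kermx mulmxBl mul1mx -mulmxA GqP -eD subrr.
  rewrite -[1%:M](subrK (D *m Gq v')) addsmxC.
  apply: addmx_sub_adds => //.
  by rewrite genmxE; exact: submxMl.
have hModm : is_mod Delta (Mod j l) by apply: Mod_is_mod => //; rewrite el.
have hGys : hom_surj (Gy : homT (Mod j l) X) by move=> v; rewrite -sub1mx; exact: hspanX.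
have [psi [hpsi epsi]] := hproj (Mod j l) X Gy p hModm hXm hGy hGys hp.
pose u : 'rV[K]_l := q *m psi j.
have hu0 : u 0 (Ordinal hl0) = 1.
  pose e0 : 'rV[K]_l := delta_mx 0 (Ordinal hl0).
  have hc : (u - e0) *m Gy j = 0.
    rewrite mulmxBl /u -mulmxA epsi hq /e0 -rowE.
    by rewrite (Gm_row0 y hl0) subrr.
  have := LI hn hDelta hk0 hyk1 hyk hc (t := Ordinal hl0) hk0 erefl.
  by rewrite !mxE eqxx /= => /eqP; rewrite subr_eq0 => /eqP.
have hqnz : forall s, (s < l)%N -> q *m pathmx Q s j != 0.
  move=> s hs; apply/negP => /eqP h0.
  have := congr1 (mulmx^~ (psi (iter s sg j))) h0.
  rewrite mul0mx -mulmxA -(hom_path _ _ hpsi) mulmxA -/u Mod_path.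
  move/matrixP => /(_ 0 (Ordinal hs)); rewrite !mxE.
  rewrite (bigD1 (Ordinal hl0)) //= big1 ?addr0.
    by rewrite mxE /= add0n !eqxx ?orbT /= hu0 mulr1 => /eqP; rewrite oner_eq0.
  move=> b hb; have : (s != b + s)%N.
    apply/eqP => h; move: hb; have -> : b = Ordinal hl0 by apply: val_inj => /=; lia.
    by rewrite eqxx.
  by rewrite mxE /= => /negPf ->; rewrite mulr0.
(* the generator z of the kernel *)
pose z : 'rV[K]_(dimv Q (iter k sg j)) := q *m pathmx Q k j.
have hzpath : forall s, z *m pathmx Q s (iter k sg j) =
    q *m pathmx Q (s + k) j *m castm Q (iter (s + k) sg j) (iter s sg (iter k sg j)).
  by move=> s; rewrite /z -mulmxA pathmxD mulmxA.
have hzp : z *m p (iter k sg j) = 0 by rewrite /z -mulmxA -(hom_path _ _ hp) mulmxA hq hyk.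
clearbody z.
have hz1 : z *m pathmx Q (l - k).-1 (iter k sg j) != 0.
  rewrite hzpath; apply/negP => /eqP h0.
  have := congr1 (mulmx^~ (castm Q (iter (l - k).-1 sg (iter k sg j)) (iter ((l - k).-1 + k) sg j))) h0.
  rewrite mul0mx -mulmxA castmK ?mulmx1; last by rewrite iterD.
  by apply/eqP; apply: hqnz; lia.
have hz0 : z *m pathmx Q (l - k) (iter k sg j) = 0.
  by rewrite hzpath subnK ?(ltnW hkl) // hql mul0mx.
pose Gz := Gm Q (iter k sg j) l z.
have hker : forall v, (kermx (p v) <= Gz v)%MS.
  move=> v; apply/row_subP => b; set w := row b (kermx (p v)).
  have hwp : w *m p v = 0 by rewrite /w -row_mul mulmx_ker row0.
  have [c ec] := submxP (submx_trans (submx1 w) (hspanQ v)).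
  have hc : c *m Gy v = 0 by rewrite -GqP mulmxA -ec hwp.
  rewrite ec mulmx_sum_row; apply: summx_sub => t _.
  case: (ltnP t k) => htk.
    case: (eqVneq (iter t sg j) v) => [et|nt].
      by rewrite (LI hn hDelta hk0 hyk1 hyk hc (t := t) htk et) scale0r sub0mx.
    by apply: scalemx_sub; rewrite Gm_row castm_neq ?mulmx0 ?sub0mx.
  apply: scalemx_sub.
  have htl : (t - k < l)%N by have := ltn_ord t; lia.
  have <- : row (Ordinal htl) (Gz v) = row t (Gq v).
    rewrite !Gm_row /= hzpath -mulmxA castmM; last by rewrite iterD.
    by rewrite subnK.
  exact: row_sub.
pose U := fun v => kermx (p v).
have hUs : is_sub U.
  move=> v; rewrite /U sub_kermx -mulmxA hp mulmxA mulmx_ker mul0mx.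
  by [].
pose Y := subrep U.
pose iota := subiota U.
have hiota : is_hom iota by apply: subiota_hom.
have hYm : is_mod Delta Y.
  move=> la hla; apply: (inj_cancel (subiota_inj U (iter n sg la))).
  by rewrite mul0mx -(hom_path _ _ hiota) (hQm _ hla) mulmx0.
have hz_in : (z <= iota (iter k sg j))%MS.
  by rewrite /iota /subiota eq_row_base /U sub_kermx hzp.
pose zY := z *m pinvmx (iota (iter k sg j)).
have hzY : zY *m iota (iter k sg j) = z by rewrite /zY mulmxKpV.
clearbody zY.
have hzYpath : forall s, zY *m pathmx Y s (iter k sg j) *m iota (iter s sg (iter k sg j)) =
    z *m pathmx Q s (iter k sg j).
  by move=> s; rewrite -mulmxA -(hom_path _ _ hiota) mulmxA hzY.
have hzY1 : zY *m pathmx Y (l - k).-1 (iter k sg j) != 0.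
  by apply: contra hz1 => /eqP h0; rewrite -hzYpath h0 mul0mx.
have hzY0 : zY *m pathmx Y (l - k) (iter k sg j) = 0.
  apply: (inj_cancel (subiota_inj U _)); by rewrite hzYpath hz0 mul0mx.
pose GzY := Gm Y (iter k sg j) l zY.
have hGzYi : forall v, GzY v *m iota v = Gz v.
  move=> v; apply/row_matrixP => b; rewrite row_mul !Gm_row -mulmxA castm_fam.
  by rewrite mulmxA hzYpath.
have hspanY : forall v, (1%:M <= GzY v)%MS.
  move=> v.
  have h1 : (iota v <= GzY v *m iota v)%MS.
    rewrite hGzYi; apply: submx_trans (hker v).
    by rewrite /iota /subiota eq_row_base.
  have [D eD] := submxP h1.
  have e1 : 1%:M = D *m GzY v.
    by apply: (inj_cancel (subiota_inj U v)); rewrite mul1mx -mulmxA.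
  by rewrite e1 submxMl.
have hlk : (0 < l - k)%N by lia.
have [hYl htopY] := cyclicC hn hDelta hYm hlk hzY1 hzY0 hl0 hspanY.
exists Y, iota; split; last split; last split.
- by split => //; split => //; apply: (top_indec hn hDelta hYm htopY).
- exact: hiota.
- exact: subiota_inj.
- move=> v; exact: subiota_im.
Qed.

End Work7.


Theorem lemma4p9 (K : fieldType) (n : nat) (hn : (2 <= n)%N)
  (Delta : {set 'I_n}) (hDelta : Delta != set0) (i : 'I_n) :
  (* (1) *)
  (forall (k : nat) (X : rep K n), isL Delta i k X -> (0 < k < 2 * n)%N) /\
  (* (2) *)
  (forall P : rep K n, is_Pe Delta i P ->
     (exists r : nat,
        iter r (@sigma n) i \in Delta /\
        (forall r' : nat, (r' < r)%N -> iter r' (@sigma n) i \notin Delta) /\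
        loewy_length P (n + r)) /\
     (forall l : nat, loewy_length P l -> (n <= l < 2 * n)%N)) /\
  (* (3) *)
  (forall (P P' : rep K n) (k l : nat),
     is_Pe Delta i P -> is_Pe Delta (iter k (@sigma n) i) P' ->
     loewy_length P l -> (n <= k < l)%N ->
     loewy_length P' (l - (k - n))) /\
  (* (4) *)
  (forall (P : rep K n) (k l : nat), is_Pe Delta i P -> loewy_length P l ->
     (0 < k < l)%N ->
     forall X : rep K n, isL Delta i k X ->
     forall (Q : rep K n) (p : homT Q X), proj_cover Delta p ->
       exists (Y : rep K n) (iota : homT Y Q),
         isL Delta (iter k (@sigma n) i) (l - k) Y /\
         is_hom iota /\ hom_inj iota /\
         (forall j, (iota j == kermx (p j))%MS)).
Proof.
split; first by move=> k X; apply: (part1 hn hDelta).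
split.
  move=> P hP; split.
    exists (rmin Delta i); split; first exact: (rmin_in hn hDelta).
    split; last exact: (core2 hn hDelta hP).
    move=> r' hr'; apply/negP => h; have := rmin_min hn hDelta h; lia.
  move=> l hl; have := loewy_uniq hl (core2 hn hDelta hP).
  have := rmin_lt hn hDelta i; lia.
split; last by move=> P k l hP hl hk X hX Q p hpc; apply: (part4 hn hDelta hP hl hk hX hpc).
move=> P P' k l hP hP' hl hk.
have el := loewy_uniq hl (core2 hn hDelta hP).
set d := (k - n)%N.
have ek : iter k (@sigma n) i = iter d (@sigma n) i.
  by rewrite -(subnK (proj1 (andP hk))) iterD iter_n.
have hd : (d < rmin Delta i)%N by rewrite /d; lia.
have e2 : rmin Delta (iter k (@sigma n) i) = (rmin Delta i - d)%N.
  rewrite ek; apply/eqP; rewrite eqn_leq; apply/andP; split.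
    apply: (rmin_min hn hDelta); rewrite -iterD subnK ?(ltnW hd) //.
    exact: (rmin_in hn hDelta).
  have := rmin_in hn hDelta (iter d (@sigma n) i); rewrite -iterD => h.
  have := rmin_min hn hDelta h; lia.
have := core2 hn hDelta hP'; rewrite e2.
by have -> : (n + (rmin Delta i - d) = l - (k - n))%N by rewrite el /d; lia.
Qed.
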